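(* Let $\varphi:U\times U\to V$ be a fully-regular alternating bilinear map and $\mathcal{S}_\varphi:=\{\varphi(x,-)\mid x\in U\}\subseteq\mathcal{L}(U,V)$. If $\#\mathbb{K}>\mathrm{urk}(\mathcal{S}_\varphi)$, then $\mathcal{S}_\varphi$ is semi-primitive.
   Context: $U,V$ finite-dimensional over a field $\mathbb{K}$. $\varphi$ is fully-regular if $V$ is spanned by its values and $\varphi(x,-)\ne0$ for all nonzero $x$. $\mathrm{urk}$ is the maximal rank of an operator in the space. For an operator space $\mathcal{T}\subseteq\mathcal{L}(U,V)$: reduced means $\bigcap_f\ker f=\{0\}$ and $\sum_f\mathrm{im} f=V$; $c$-defective means $\dim\ker f\geq c$ for all $f\in\mathcal{T}$; the defectiveness index is the greatest such $c$; $\mathcal{T}$ is semi-primitive if it is reduced and there is no linear hyperplane $U'$ of $U$ such that $\{f_{|U'}\mid f\in\mathcal{T}\}$ is $c$-defective, $c$ being the defectiveness index of $\mathcal{T}$. *)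

(* Defs.v *)
From HB Require Import structures.
From mathcomp Require Import all_boot all_order all_algebra.
Set Implicit Arguments. Unset Strict Implicit. Unset Printing Implicit Defensive.
Import Order.TTheory GRing.Theory.
Local Open Scope ring_scope.

Section OperatorSpaces.
Variables (K : fieldType) (U V : vectType K).

Definition op_space := 'Hom(U, V) -> Prop.

Definition reduced (T : op_space) : Prop :=
  (forall u : U, (forall f, T f -> f u = 0) -> u = 0) /\
  (forall W : {vspace V}, (forall f, T f -> (limg f <= W)%VS) -> W = fullv).

Definition c_defective (T : op_space) (c : nat) : Prop :=
  forall f, T f -> (c <= \dim (lker f))%N.

Definition is_defect_index (T : op_space) (c : nat) : Prop :=
  c_defective T c /\ forall d, c_defective T d -> (d <= c)%N.

(* the restrictions {f|U' | f in T} are c-defective; ker (f|U') = ker f :&: U' *)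
Definition restr_c_defective (T : op_space) (U' : {vspace U}) (c : nat) : Prop :=
  forall f, T f -> (c <= \dim (lker f :&: U')%VS)%N.

Definition hyperplane (U' : {vspace U}) : Prop :=
  (\dim U').+1 = \dim (fullv : {vspace U}).

Definition semi_primitive (T : op_space) : Prop :=
  reduced T /\
  forall c, is_defect_index T c ->
    ~ (exists U' : {vspace U}, hyperplane U' /\ restr_c_defective T U' c).

Definition is_urk (T : op_space) (r : nat) : Prop :=
  (exists f, T f /\ \dim (limg f) = r) /\
  (forall f, T f -> (\dim (limg f) <= r)%N).

Definition bilinear_map (phi : U -> U -> V) : Prop :=
  (forall x, linear (phi x)) /\ (forall y, linear (fun x => phi x y)).

Definition alternating (phi : U -> U -> V) : Prop := forall x, phi x x = 0.

Definition fully_regular (phi : U -> U -> V) : Prop :=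
  (forall W : {vspace V}, (forall x y, phi x y \in W) -> W = fullv) /\
  (forall x, x != 0 -> exists y, phi x y != 0).

Definition S_of (phi : U -> U -> V) : op_space :=
  fun f => exists x : U, forall y, f y = phi x y.

End OperatorSpaces.

(* #K > n : K has more than n elements (K may be infinite) *)
Definition card_gt (K : eqType) (n : nat) : Prop :=
  exists s : seq K, uniq s && (n < size s)%N.

(* Main.v *)
Require Import Defs.
From HB Require Import structures.
From mathcomp Require Import all_boot all_order all_algebra.
From Stdlib Require Import Classical.
Set Implicit Arguments. Unset Strict Implicit. Unset Printing Implicit Defensive.
Import Order.TTheory GRing.Theory.

Section Helpers.
Local Open Scope ring_scope.
Lemma key_mx (K : fieldType) m n (A B : 'M[K]_(m,n)) (s : seq K) :
  uniq s -> (\rank A < size s)%N ->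
  (forall k, k \in s -> (\rank (k *: A + B)%R < \rank A)%N) -> False.
Proof.
move=> us lts Hs.
set r := \rank A.
have rm : (r <= m)%N := rank_leq_row A.
have rn : (r <= n)%N := rank_leq_col A.
set L := col_ebase A; set R := row_ebase A.
have uL : L \in unitmx := col_ebase_unit A.
have uR : R \in unitmx := row_ebase_unit A.
set B' := invmx L *m B *m invmx R.
have eqk k : k *: A + B = L *m (k *: pid_mx r + B') *m R.
  rewrite mulmxDr mulmxDl -scalemxAr -scalemxAl mulmx_ebase.
  by rewrite /B' !mulmxA mulmxV // mul1mx -mulmxA mulVmx // mulmx1.
pose P : 'M[K]_(r,m) := pid_mx r.
pose Q : 'M[K]_(n,r) := pid_mx r.
set D := P *m B' *m Q.
have rk k : k \in s -> (\rank (D + k%:M)%R < r)%N.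
  move=> ks; apply: (leq_ltn_trans _ (Hs k ks)).
  have E : D + k%:M = P *m (k *: pid_mx r + B') *m Q.
    rewrite mulmxDr mulmxDl addrC -scalemxAr -scalemxAl /P /Q.
    by rewrite pid_mx_id // pid_mx_id // pid_mx_1 scalemx1.
  apply: (@leq_trans (\rank (P *m (k *: pid_mx r + B') *m Q))).
    by rewrite E.
  rewrite eqk (mxrankMfree _ (etrans (row_free_unit R) uR)).
  rewrite (eqmxMfull _ (etrans (row_full_unit L) uL)).
  apply: leq_trans (mxrankM_maxl _ _) _.
  exact: mxrankM_maxr.
have Hroots : all (root (char_poly D)) (map -%R s).
  apply/allP => y /mapP [k ks ->].
  rewrite -eigenvalue_root_char /eigenvalue /eigenspace kermx_eq0 /row_free.
  rewrite raddfN opprK neq_ltn; apply/orP; left; exact: rk.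
have := max_poly_roots _ Hroots.
rewrite size_char_poly size_map map_inj_uniq ?us; last exact: oppr_inj.
have nz : char_poly D != 0 by rewrite monic_neq0 // char_poly_monic.
by move/(_ nz isT); rewrite ltnS leqNgt lts.
Qed.

Import VectorInternalTheory.

Lemma dim_limg_rank (K : fieldType) (U V : vectType K) (f : 'Hom(U,V)) :
  \dim (limg f) = \rank (f2mx f).
Proof.
rewrite /dimv (_ : limg f = mx2vs (vs2mx fullv *m f2mx f)); last by rewrite unlock.
by rewrite mx2vsK /fullv /= genmx1 mul1mx.
Qed.
Lemma f2mx_lin (K : fieldType) (U V : vectType K) (A B : 'Hom(U,V)) k :
  f2mx (k *: A + B) = k *: f2mx A + f2mx B.
Proof.
have H (f : 'Hom(U,V)) u : u *m f2mx f = v2r (f (r2v u)).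
  rewrite (_ : fun_of_lfun f = r2v \o mulmxr (f2mx f) \o v2r) ?unlock //=.
  by rewrite !r2vK.
apply/row_matrixP => i; rewrite !rowE mulmxDr -scalemxAr !H.
by rewrite add_lfunE scale_lfunE linearD linearZ.
Qed.

Lemma key_hom (K : fieldType) (U V : vectType K) (A B : 'Hom(U,V)) (s : seq K) :
  uniq s -> (\dim (limg A) < size s)%N ->
  (forall k, k \in s -> (\dim (limg (k *: A + B)%R) < \dim (limg A))%N) -> False.
Proof.
move=> us lts Hs; apply: (@key_mx K _ _ (f2mx A) (f2mx B) s us).
  by rewrite -dim_limg_rank.
by move=> k ks; rewrite -f2mx_lin -!dim_limg_rank; exact: Hs.
Qed.

Definition fL (K : fieldType) (U V : vectType K) (f : U -> V) (H : linear f)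
  : {linear U -> V} := HB.pack f (GRing.isLinear.Build K U V _ f H).

Lemma linfunE' (K : fieldType) (U V : vectType K) (f : U -> V) (H : linear f) u :
  linfun f u = f u.
Proof. exact: (lfunE (fL H) u). Qed.

Lemma max_exists (P : nat -> Prop) (d k0 : nat) : P k0 ->
  (forall k, P k -> (k <= d)%N) -> exists m, P m /\ forall k, P k -> (k <= m)%N.
Proof.
elim: d k0 => [|d IH] k0 Pk0 Hb.
  by exists k0; split=> // k Pk; exact: leq_trans (Hb k Pk) (leq0n k0).
case: (classic (P d.+1)) => [Pd|nPd]; first by exists d.+1.
apply: (IH k0 Pk0) => k Pk; have := Hb k Pk; rewrite leq_eqVlt ltnS.
by case/orP => // /eqP Ek; rewrite Ek in Pk.
Qed.

End Helpers.

Theorem mainTheorem17 (K : fieldType) (U V : vectType K) (phi : U -> U -> V) :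
  bilinear_map phi -> alternating phi -> fully_regular phi ->
  (forall r, is_urk (S_of phi) r -> card_gt K r) ->
  semi_primitive (S_of phi).
Proof.
Local Open Scope ring_scope.
move=> [lin1 lin2] alt [span nondeg] hK.
pose F x : 'Hom(U,V) := linfun (phi x).
have FE x y : F x y = phi x y by rewrite /F linfunE'.
have SF x : S_of phi (F x) by exists x => y; rewrite FE.
have SP f : S_of phi f -> exists x, f = F x.
  by case=> x Hx; exists x; apply/lfunP => y; rewrite Hx FE.
have philD1 y x1 x2 : phi (x1 + x2) y = phi x1 y + phi x2 y.
  exact: (linearD (fL (lin2 y))).
have philZ1 y k x : phi (k *: x) y = k *: phi x y.
  exact: (linearZ_LR (fL (lin2 y)) k x).
have philD2 x y1 y2 : phi x (y1 + y2) = phi x y1 + phi x y2.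
  exact: (linearD (fL (lin1 x))).
have antis x y : phi x y = - phi y x.
  have := alt (x + y); rewrite philD1 !philD2 !alt add0r addr0.
  by move/eqP; rewrite addr_eq0 => /eqP.
split.
  split.
    move=> u Hu; apply/eqP; apply/negPn/negP => /nondeg [y].
    by rewrite antis -FE Hu ?SF // oppr0 eqxx.
  move=> W HW; apply: span => x y; rewrite -FE.
  by apply: (subvP (HW _ (SF x))); apply: memv_img; exact: memvf.
move=> c [cdef cmax] [U' [hyp restr]].
set n := \dim (fullv : {vspace U}).
pose rk (f : 'Hom(U,V)) := \dim (limg f).
have kerdim f : \dim (lker f) = (n - rk f)%N.
  by rewrite /n -(limg_ker_dim f fullv) capfv addnK.
have [r [[x0 Hx0] Hmax]] : exists r, (exists x, rk (F x) = r) /\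
    forall x, (rk (F x) <= r)%N.
  have bnd : forall k, (exists x, rk (F x) = k) ->
      (k <= \dim (fullv : {vspace V}))%N.
    by move=> k [x <-]; apply: dimvS; exact: subvf.
  have [m [Pm Mm]] := @max_exists (fun k => exists x, rk (F x) = k)
     (\dim (fullv : {vspace V})) (rk (F 0)) (ex_intro _ 0 erefl) bnd.
  by exists m; split=> // x; apply: Mm; exists x.
have urk : is_urk (S_of phi) r.
  split; first by exists (F x0); split.
  by move=> f /SP [x ->]; exact: Hmax.
have [s /andP [us lts]] := hK r urk.
have cge : (n - r <= c)%N.
  apply: cmax => f /SP [x ->]; rewrite kerdim; apply: leq_sub2l; exact: Hmax.
have inU x : rk (F x) = r -> x \in U'.
  move=> Hx.
  have Hd : (\dim (lker (F x)) <= \dim (lker (F x) :&: U'))%N.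
    rewrite kerdim Hx; apply: leq_trans cge _; exact: restr (SF x).
  have sub : (lker (F x) <= U')%VS.
    have := dimv_leqif_eq (capvSl (lker (F x)) U').
    move=> /leqifP; case: eqP => [E _|_ Hlt].
      by apply/capv_idPl.
    by move: Hlt; rewrite ltnNge Hd.
  apply: (subvP sub); rewrite memv_ker FE alt //.
have x0U := inU x0 Hx0.
have [y yU] : exists y, y \notin U'.
  apply: NNPP => Hn.
  have : (fullv <= U')%VS.
    apply/subvP => z _; apply: negbNE; apply/negP => zn; apply: Hn; by exists z.
  move/dimvS; rewrite /hyperplane in hyp; rewrite -hyp ltnn.
  done.
apply: (@key_hom K U V (F x0) (F y) s us); first by move: Hx0; rewrite /rk => ->.
move=> k ks.
have E : (k *: F x0 + F y)%R = F (k *: x0 + y).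
  by apply/lfunP => z; rewrite add_lfunE scale_lfunE !FE philD1 philZ1.
rewrite E; have := Hmax (k *: x0 + y); move: Hx0 (inU (k *: x0 + y)).
rewrite /rk => -> Hin Hle; rewrite ltn_neqAle Hle andbT.
apply/eqP => /Hin H; move: yU; rewrite -(addKr (k *: x0) y).
by rewrite rpredD ?rpredN ?rpredZ.
Qed.
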